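(* Let $X$ be a Hausdorff complex topological vector space with $\dim X>1$. Let $\Gamma\subset\mathcal{B}(X)$ have the property that for all $T,S\in\Gamma$ with $T\neq S$ there exists $A\in\Gamma$ such that $T=AS$. If $\Gamma$ is supercyclic, then $\Gamma$ is supercyclic transitive.
   Context: $\mathcal{B}(X)$ denotes the space of continuous linear operators on $X$. For $\Gamma\subset\mathcal{B}(X)$ and $x\in X$, put $\mathbb{C}\,Orb(\Gamma,x)=\{\alpha Tx:\alpha\in\mathbb{C},\,T\in\Gamma\}$. The set $\Gamma$ is called supercyclic if there exists $x\in X$ such that $\mathbb{C}\,Orb(\Gamma,x)$ is dense in $X$. A set $\Gamma\subset\mathcal{B}(X)$ is called supercyclic transitive if, for each pair $(U,V)$ of nonempty open subsets of $X$, there exist $\alpha\in\mathbb{C}\setminus\{0\}$ and $T\in\Gamma$ such that $T(\alpha U)\cap V\neq\emptyset$. *)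

(* Defs.v *)
From Stdlib Require Import Reals.
Open Scope R_scope.

Record C : Type := mkC { Re : R; Im : R }.
Definition C0 : C := mkC 0 0.
Definition C1 : C := mkC 1 0.
Definition Cadd (a b : C) : C := mkC (Re a + Re b) (Im a + Im b).
Definition Copp (a : C) : C := mkC (- Re a) (- Im a).
Definition Cmul (a b : C) : C :=
  mkC (Re a * Re b - Im a * Im b) (Re a * Im b + Im a * Re b).
Definition Cabs (a : C) : R := sqrt (Re a * Re a + Im a * Im a).

Record CTVS : Type := {
  carrier :> Type;
  vzero : carrier;
  vadd : carrier -> carrier -> carrier;
  vopp : carrier -> carrier;
  vscal : C -> carrier -> carrier;
  is_open : (carrier -> Prop) -> Prop
}.

Arguments vzero {_}.
Arguments vadd {_} _ _.
Arguments vopp {_} _.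
Arguments vscal {_} _ _.
Arguments is_open {_} _.

Definition is_HausdorffCTVS (X : CTVS) : Prop :=
  (forall x y z : X, vadd x (vadd y z) = vadd (vadd x y) z) /\
  (forall x y : X, vadd x y = vadd y x) /\
  (forall x : X, vadd vzero x = x) /\
  (forall x : X, vadd x (vopp x) = vzero) /\
  (forall (a : C) (x y : X), vscal a (vadd x y) = vadd (vscal a x) (vscal a y)) /\
  (forall (a b : C) (x : X), vscal (Cadd a b) x = vadd (vscal a x) (vscal b x)) /\
  (forall (a b : C) (x : X), vscal a (vscal b x) = vscal (Cmul a b) x) /\
  (forall x : X, vscal C1 x = x) /\
  is_open (fun _ : X => True) /\
  is_open (fun _ : X => False) /\
  (forall U V : X -> Prop, is_open U -> is_open V ->
     is_open (fun x => U x /\ V x)) /\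
  (forall F : (X -> Prop) -> Prop, (forall U, F U -> is_open U) ->
     is_open (fun x => exists U, F U /\ U x)) /\
  (forall U V : X -> Prop, (forall x, U x <-> V x) -> is_open U -> is_open V) /\
  (forall (x y : X) (W : X -> Prop), is_open W -> W (vadd x y) ->
     exists U V : X -> Prop, is_open U /\ is_open V /\ U x /\ V y /\
       forall u v, U u -> V v -> W (vadd u v)) /\
  (forall (a : C) (x : X) (W : X -> Prop), is_open W -> W (vscal a x) ->
     exists (eps : R) (U : X -> Prop), eps > 0 /\ is_open U /\ U x /\
       forall b u, Cabs (Cadd b (Copp a)) < eps -> U u -> W (vscal b u)) /\
  (forall x y : X, x <> y ->
     exists U V : X -> Prop, is_open U /\ is_open V /\ U x /\ V y /\
       forall z, ~ (U z /\ V z)).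

Definition dim_gt1 (X : CTVS) : Prop :=
  exists x y : X, forall a b : C,
    vadd (vscal a x) (vscal b y) = vzero -> a = C0 /\ b = C0.

Definition is_bounded_op (X : CTVS) (T : X -> X) : Prop :=
  (forall x y : X, T (vadd x y) = vadd (T x) (T y)) /\
  (forall (a : C) (x : X), T (vscal a x) = vscal a (T x)) /\
  (forall W : X -> Prop, is_open W -> is_open (fun x => W (T x))).

Definition op_eq (X : CTVS) (T S : X -> X) : Prop := forall x, T x = S x.

Definition COrb (X : CTVS) (Gamma : (X -> X) -> Prop) (x : X) : X -> Prop :=
  fun y => exists (a : C) (T : X -> X), Gamma T /\ y = vscal a (T x).

Definition dense (X : CTVS) (D : X -> Prop) : Prop :=
  forall U : X -> Prop, is_open U -> (exists u, U u) -> exists y, U y /\ D y.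

Definition supercyclic (X : CTVS) (Gamma : (X -> X) -> Prop) : Prop :=
  exists x : X, dense X (COrb X Gamma x).

Definition supercyclic_transitive (X : CTVS) (Gamma : (X -> X) -> Prop) : Prop :=
  forall U V : X -> Prop, is_open U -> (exists u, U u) ->
    is_open V -> (exists v, V v) ->
    exists (a : C) (T : X -> X), a <> C0 /\ Gamma T /\
      exists u, U u /\ V (T (vscal a u)).

(* Main.v *)
Require Import Defs.
From Stdlib Require Import Reals Lra Lia Psatz Classical ClassicalEpsilon.
Require Import Defs.
Open Scope R_scope.

Lemma C_ext (a b : C) : Re a = Re b -> Im a = Im b -> a = b.
Proof. destruct a, b; simpl; intros; subst; reflexivity. Qed.

Definition Cinv (b : C) : C :=
  mkC (Re b / (Re b * Re b + Im b * Im b)) (- Im b / (Re b * Re b + Im b * Im b)).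

Definition nrm2 (a : C) := Re a * Re a + Im a * Im a.

Lemma nrm2_pos (b : C) : b <> C0 -> 0 < nrm2 b.
Proof.
  intros H. destruct b as [p q]; unfold nrm2; simpl.
  destruct (Req_dec p 0); destruct (Req_dec q 0); subst;
   try (exfalso; apply H; reflexivity); nra.
Qed.

Lemma Cinv_l (b : C) : b <> C0 -> Cmul (Cinv b) b = C1.
Proof.
  intros H. pose proof (nrm2_pos b H) as Hp. unfold nrm2 in Hp.
  destruct b as [p q]; simpl in *. apply C_ext; simpl; field; lra.
Qed.

Lemma Cmul_inv_r (a b : C) : b <> C0 -> Cmul (Cmul a (Cinv b)) b = a.
Proof.
  intros H. pose proof (nrm2_pos b H) as Hp. unfold nrm2 in Hp.
  destruct a as [r s]; destruct b as [p q]; simpl in *. apply C_ext; simpl; field; lra.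
Qed.

Lemma Cabs_lt (z : C) (r : R) : 0 < r -> nrm2 z < r * r -> Cabs z < r.
Proof.
  intros Hr H. unfold Cabs. rewrite <- (sqrt_square r) by lra.
  apply sqrt_lt_1_alt. unfold nrm2 in H. split; nra.
Qed.

Lemma open_local (X : CTVS) (HX : is_HausdorffCTVS X) (P : X -> Prop) :
  (forall x, P x -> exists O, is_open O /\ O x /\ forall y, O y -> P y) -> is_open P.
Proof.
  destruct HX as (Hassoc & Hcomm & H0l & Hoppr & Hsd & Hsdd & Hsm & Hs1 & HoT & HoF & HoI & HoU & HoExt & Hadd & Hsc & Hhaus).
  intros H.
  apply (HoExt (fun x => exists O, (is_open O /\ forall y, O y -> P y) /\ O x)).
  - intros x; split.
    + intros (O & (_ & HO) & Ox). auto.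
    + intros Px. destruct (H x Px) as (O & HO & Ox & HOP). exists O; auto.
  - apply HoU. intros O [HO _]; exact HO.
Qed.

Ltac dHX HX := destruct HX as (Hassoc & Hcomm & H0l & Hoppr & Hsd & Hsdd & Hsm & Hs1 & HoT & HoF & HoI & HoU & HoExt & Hadd & Hsc & Hhaus).

Lemma add_cancel (X : CTVS) (HX : is_HausdorffCTVS X) (a b : X) :
  vadd a b = a -> b = vzero.
Proof.
  pose proof HX as HX'. dHX HX'. intros H.
  assert (E : vadd (vopp a) (vadd a b) = vadd (vopp a) a) by (rewrite H; auto).
  rewrite Hassoc in E. rewrite (Hcomm (vopp a) a), Hoppr, H0l in E. exact E.
Qed.

Lemma scal0 (X : CTVS) (HX : is_HausdorffCTVS X) (z : X) : vscal C0 z = vzero.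
Proof.
  pose proof HX as HX'. dHX HX'.
  apply (add_cancel X HX (vscal C0 z)).
  rewrite <- Hsdd. f_equal. apply C_ext; simpl; ring.
Qed.

Lemma scalv0 (X : CTVS) (HX : is_HausdorffCTVS X) (a : C) : vscal a (@vzero X) = vzero.
Proof.
  pose proof HX as HX'. dHX HX'.
  apply (add_cancel X HX (vscal a vzero)).
  rewrite <- Hsd. rewrite H0l. reflexivity.
Qed.

Lemma add0r (X : CTVS) (HX : is_HausdorffCTVS X) (x : X) : vadd x vzero = x.
Proof. pose proof HX as HX'. dHX HX'. rewrite Hcomm; auto. Qed.

Lemma scal_inj0 (X : CTVS) (HX : is_HausdorffCTVS X) (b : C) (y : X) :
  b <> C0 -> vscal b y = vzero -> y = vzero.
Proof.
  pose proof HX as HX'. dHX HX'. intros Hb H.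
  rewrite <- (Hs1 y), <- (Cinv_l b Hb), <- Hsm, H. apply scalv0; auto.
Qed.

Lemma scal_nz (X : CTVS) (HX : is_HausdorffCTVS X) (a : C) (y : X) :
  vscal a y <> vzero -> a <> C0.
Proof. intros H E; subst; apply H, scal0; auto. Qed.

Lemma Cabs_self (a : C) (eps : R) : 0 < eps -> Cabs (Cadd a (Copp a)) < eps.
Proof. intros H; apply Cabs_lt; auto; unfold nrm2; simpl; nra. Qed.

Lemma open_scal (X : CTVS) (HX : is_HausdorffCTVS X) (beta : C) (W : X -> Prop) :
  is_open W -> is_open (fun u => W (vscal beta u)).
Proof.
  pose proof HX as HX'. dHX HX'. intros HW.
  apply open_local; auto. intros x Hx.
  destruct (Hsc beta x W HW Hx) as (eps & O & Heps & HO & Ox & HOW).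
  exists O; repeat split; auto. intros y Oy. apply HOW; auto. apply Cabs_self; lra.
Qed.

Lemma open_nz (X : CTVS) (HX : is_HausdorffCTVS X) : is_open (fun z : X => z <> vzero).
Proof.
  pose proof HX as HX'. dHX HX'.
  apply open_local; auto. intros x Hx.
  destruct (Hhaus x vzero Hx) as (U & V & HU & HV & Ux & V0 & Hd).
  exists U; repeat split; auto. intros y Uy E; subst. apply (Hd vzero); auto.
Qed.

Lemma C1_neq_C0 : C1 <> C0.
Proof. intros H. injection H. lra. Qed.

Lemma dim_nz (X : CTVS) (HX : is_HausdorffCTVS X) (Hdim : dim_gt1 X) :
  exists x : X, x <> vzero.
Proof.
  destruct Hdim as (x & y & H). exists x. intros E; subst.
  destruct (H C1 C0) as [H1 _].
  - rewrite scalv0, scal0, add0r; auto.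
  - apply C1_neq_C0; auto.
Qed.

Lemma nonzero_in_open (X : CTVS) (HX : is_HausdorffCTVS X) (Hdim : dim_gt1 X)
  (U : X -> Prop) : is_open U -> (exists u, U u) -> exists u, U u /\ u <> vzero.
Proof.
  pose proof HX as HX'. dHX HX'. intros HU [u0 Hu0].
  apply NNPP; intros Hn.
  assert (Hall : forall u, U u -> u = vzero).
  { intros u Uu. apply NNPP; intros Hu. apply Hn; eauto. }
  destruct (dim_nz X HX Hdim) as [x Hx]. apply Hx.
  assert (U0 : U (vscal C0 x)) by (rewrite scal0; auto; rewrite <- (Hall u0); auto).
  destruct (Hsc C0 x U HU U0) as (eps & O & Heps & HO & Ox & HOW).
  apply (scal_inj0 X HX (mkC (eps/2) 0)).
  - intros E; injection E; lra.
  - apply Hall, HOW; auto. apply Cabs_lt; auto. unfold nrm2; simpl; nra.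
Qed.

Lemma exists_notin_line (X : CTVS) (HX : is_HausdorffCTVS X) (Hdim : dim_gt1 X) (w : X) :
  exists z : X, forall c, z <> vscal c w.
Proof.
  pose proof HX as HX'. dHX HX'.
  destruct Hdim as (x & y & H).
  destruct (classic (exists c, x = vscal c w)) as [[a Ha] | Hx].
  2:{ exists x. intros c E. apply Hx; eauto. }
  destruct (classic (exists c, y = vscal c w)) as [[b Hb] | Hy].
  2:{ exists y. intros c E. apply Hy; eauto. }
  exfalso.
  destruct (H b (Copp a)) as [H1 H2].
  - rewrite Ha, Hb, !Hsm, <- Hsdd.
    replace (Cadd (Cmul b a) (Cmul (Copp a) b)) with C0 by (apply C_ext; simpl; ring).
    apply scal0; auto.
  - assert (a = C0) by (destruct a; injection H2; intros; apply C_ext; simpl; lra).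
    subst a. rewrite scal0 in Ha; auto. subst x.
    destruct (H C1 C0) as [H3 _].
    + rewrite scalv0, scal0, add0r; auto.
    + apply C1_neq_C0; auto.
Qed.

Lemma perturb (X : CTVS) (HX : is_HausdorffCTVS X) (V : X -> Prop) (w z : X) (al : C) :
  is_open V -> V (vscal al w) -> (forall c, z <> vscal c w) ->
  exists p, V p /\ forall c, p <> vscal c w.
Proof.
  pose proof HX as HX'. dHX HX'. intros HV Hv Hz.
  assert (E0 : V (vadd (vscal al w) (vscal C0 z))) by (rewrite scal0, add0r; auto).
  destruct (Hadd _ _ V HV E0) as (U1 & V1 & HU1 & HV1 & U1v & V1z & HUV).
  destruct (Hsc C0 z V1 HV1 V1z) as (eps & O & Heps & HO & Oz & HOW).
  set (t := mkC (eps/2) 0).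
  assert (Ht : V1 (vscal t z)).
  { apply HOW; auto. apply Cabs_lt; auto. unfold nrm2, t; simpl; nra. }
  exists (vadd (vscal al w) (vscal t z)). split; auto.
  intros c E.
  assert (tnz : t <> C0) by (intros E'; injection E'; unfold t in *; lra).
  assert (E2 : vscal t z = vscal (Cadd (Copp al) c) w).
  { rewrite Hsdd, <- E, Hassoc, <- Hsdd.
    replace (Cadd (Copp al) al) with C0 by (apply C_ext; simpl; ring).
    rewrite scal0; auto. }
  apply (Hz (Cmul (Cinv t) (Cadd (Copp al) c))).
  rewrite <- Hsm, <- E2, Hsm, Cinv_l; auto.
Qed.

Lemma lemA (X : CTVS) (HX : is_HausdorffCTVS X) (w : X) (e : R) :
  w <> vzero -> 0 < e ->
  exists G : X -> Prop, is_open G /\ G vzero /\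
    forall c, G (vscal c w) -> Rabs (Re c) < e /\ Rabs (Im c) < e.
Proof.
  pose proof HX as HX'. dHX HX'. intros Hw He.
  destruct (Hhaus w vzero Hw) as (H & G0 & HH & HG0 & Hw' & G00 & Hd).
  assert (G0' : G0 (vscal C0 vzero)) by (rewrite scal0; auto).
  destruct (Hsc C0 vzero G0 HG0 G0') as (eta & N0 & Heta & HN0 & N00 & HNW).
  set (s := e * eta / 2).
  set (beta := mkC (/ s) 0).
  assert (Hs : 0 < s) by (unfold s; nra).
  exists (fun u => N0 (vscal beta u)). split; [apply open_scal; auto|]. split.
  { rewrite scalv0; auto. }
  intros c Hc.
  apply NNPP; intros Hn.
  assert (HD : e * e <= nrm2 c).
  { unfold nrm2. destruct (Rle_lt_dec e (Rabs (Re c))) as [h|h].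
    - assert (e * e <= Rabs (Re c) * Rabs (Re c)) by nra.
      rewrite <- Rabs_mult, Rabs_right in H0 by nra. nra.
    - destruct (Rle_lt_dec e (Rabs (Im c))) as [h'|h'].
      + assert (e * e <= Rabs (Im c) * Rabs (Im c)) by nra.
        rewrite <- Rabs_mult, Rabs_right in H0 by nra. nra.
      + exfalso; apply Hn; auto. }
  assert (cnz : c <> C0) by (intros E; subst; unfold nrm2 in HD; simpl in HD; nra).
  set (b := Cmul (mkC s 0) (Cinv c)).
  assert (Hb : G0 (vscal b (vscal beta (vscal c w)))).
  { apply HNW; auto. apply Cabs_lt; auto.
    unfold nrm2, b, Cinv; simpl. unfold nrm2 in HD.
    destruct c as [p q]; simpl in *.
    set (D := p * p + q * q) in *.
    assert (HD0 : 0 < D) by nra.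
    replace ((s * (p / D) - 0 * (- q / D) + - 0) * (s * (p / D) - 0 * (- q / D) + - 0) +
             (s * (- q / D) + 0 * (p / D) + - 0) * (s * (- q / D) + 0 * (p / D) + - 0))
      with (s * s / D) by (unfold D in *; field; lra).
    apply (Rle_lt_trans _ (s * s / (e * e))).
    - unfold Rdiv. apply Rmult_le_compat_l; [nra|]. apply Rinv_le_contravar; nra.
    - unfold s. field_simplify; nra. }
  rewrite !Hsm in Hb.
  replace (Cmul (Cmul b beta) c) with C1 in Hb.
  - rewrite Hs1 in Hb. apply (Hd w); auto.
  - unfold b, beta. pose proof (nrm2_pos c cnz) as Hp. unfold nrm2 in Hp.
    destruct c as [p q]; apply C_ext; simpl in *; field; lra.
Qed.

Definition m1 : C := mkC (-1) 0.

Lemma lemO (X : CTVS) (HX : is_HausdorffCTVS X) (w p : X) (e : R) :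
  w <> vzero -> 0 < e ->
  exists O : X -> Prop, is_open O /\ O p /\
    forall a b, O (vscal a w) -> O (vscal b w) ->
      Rabs (Re a - Re b) < e /\ Rabs (Im a - Im b) < e.
Proof.
  pose proof HX as HX'. dHX HX'. intros Hw He.
  destruct (lemA X HX w e Hw He) as (G & HG & G0 & HGc).
  assert (E0 : G (vadd p (vscal m1 p))).
  { rewrite <- (Hs1 p) at 1. rewrite <- Hsdd.
    replace (Cadd C1 m1) with C0 by (apply C_ext; simpl; ring). rewrite scal0; auto. }
  destruct (Hadd _ _ G HG E0) as (U1 & V1 & HU1 & HV1 & U1p & V1p & HUV).
  destruct (Hsc m1 p V1 HV1 V1p) as (eps & U2 & Heps & HU2 & U2p & HUW).
  exists (fun x => U1 x /\ U2 x). split; [apply HoI; auto|]. split; [auto|].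
  intros a b [Ha1 Ha2] [Hb1 Hb2].
  assert (HG1 : G (vadd (vscal a w) (vscal m1 (vscal b w)))).
  { apply HUV; auto. apply HUW; auto. apply Cabs_self; lra. }
  rewrite Hsm, <- Hsdd in HG1. apply HGc in HG1.
  destruct a as [Re0 Im0], b as [Re1 Im1]; unfold m1 in HG1; simpl in *.
  replace (Re0 - Re1) with (Re0 + (-1 * Re1 - 0 * Im1)) by ring.
  replace (Im0 - Im1) with (Im0 + (-1 * Im1 + 0 * Re1)) by ring. exact HG1.
Qed.

Lemma arch (eps : R) : 0 < eps -> exists k : nat, / INR (S k) < eps.
Proof.
  intros H. destruct (archimed_cor1 eps H) as (N & HN & HN0).
  exists (pred N). replace (S (pred N)) with N by lia. exact HN.
Qed.

Lemma invS_pos (k : nat) : 0 < / INR (S k).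
Proof. apply Rinv_0_lt_compat, lt_0_INR; lia. Qed.

Lemma cauchy_lim (u : nat -> R) :
  (forall k n m, (n >= k)%nat -> (m >= k)%nat -> Rabs (u n - u m) < / INR (S k)) ->
  exists l, forall k m, (m >= k)%nat -> Rabs (u m - l) <= / INR (S k).
Proof.
  intros H.
  assert (Hc : Cauchy_crit u).
  { intros eps Heps. destruct (arch eps Heps) as [k Hk]. exists k.
    intros n m Hn Hm. unfold Rdist. specialize (H k n m Hn Hm). lra. }
  destruct (R_complete u Hc) as [l Hl]. exists l.
  intros k m Hm. apply Rnot_lt_le; intros h.
  destruct (Hl (Rabs (u m - l) - / INR (S k))) as [N HN]; [lra|].
  specialize (HN (max N k) ltac:(lia)). unfold Rdist in HN.
  specialize (H k m (max N k) Hm ltac:(lia)).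
  pose proof (Rabs_triang (u m - u (max N k)) (u (max N k) - l)) as T.
  replace (u m - u (max N k) + (u (max N k) - l)) with (u m - l) in T by ring.
  lra.
Qed.

Lemma Rabs_le_2 (x a : R) : Rabs x <= a -> x <= a /\ - a <= x.
Proof. intros H. unfold Rabs in H. destruct (Rcase_abs x); split; lra. Qed.

Lemma closed_line (X : CTVS) (HX : is_HausdorffCTVS X) (w p : X) :
  (forall c, p <> vscal c w) ->
  exists P : X -> Prop, is_open P /\ P p /\ forall c, ~ P (vscal c w).
Proof.
  pose proof HX as HX'. dHX HX'. intros Hp.
  destruct (classic (w = vzero)) as [Hw | Hw].
  { subst w. assert (p <> vzero) by (intros E; apply (Hp C0); rewrite scal0; auto).
    destruct (Hhaus p vzero H) as (P & Q & HP & HQ & Pp & Q0 & Hd).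
    exists P. repeat split; auto. intros c Pc. rewrite scalv0 in Pc; auto.
    apply (Hd vzero); auto. }
  apply NNPP; intros Hn.
  assert (Hden : forall P, is_open P -> P p -> exists c, P (vscal c w)).
  { intros P HP Pp. apply NNPP; intros h. apply Hn. exists P. repeat split; auto.
    intros c Pc. apply h; eauto. }
  assert (Ofun : forall k : nat, {O : X -> Prop | is_open O /\ O p /\
    forall a b, O (vscal a w) -> O (vscal b w) ->
      Rabs (Re a - Re b) < / INR (S k) /\ Rabs (Im a - Im b) < / INR (S k)}).
  { intros k. apply constructive_indefinite_description. apply lemO; auto. apply invS_pos. }
  set (Pk := fix Pk (k : nat) : X -> Prop :=
    match k with
    | O => proj1_sig (Ofun O)
    | S k' => fun z => Pk k' z /\ proj1_sig (Ofun (S k')) z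
    end).
  assert (HPo : forall k, is_open (Pk k)).
  { induction k; simpl.
    - destruct (proj2_sig (Ofun 0%nat)); auto.
    - apply HoI; auto. destruct (proj2_sig (Ofun (S k))); auto. }
  assert (HPp : forall k, Pk k p).
  { induction k; simpl.
    - destruct (proj2_sig (Ofun 0%nat)) as (_ & ? & _); auto.
    - split; auto. destruct (proj2_sig (Ofun (S k))) as (_ & ? & _); auto. }
  assert (HPs : forall k j z, (j <= k)%nat -> Pk k z -> proj1_sig (Ofun j) z).
  { induction k; intros j z Hj Hz.
    - replace j with 0%nat by lia. exact Hz.
    - destruct Hz as [Hz1 Hz2]. destruct (Nat.eq_dec j (S k)) as [->|]; auto.
      apply IHk; auto; lia. }
  assert (seq : forall k, {c | Pk k (vscal c w)}).
  { intros k. apply constructive_indefinite_description. apply Hden; auto. }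
  set (a := fun k => proj1_sig (seq k)).
  assert (Ha : forall k n m, (n >= k)%nat -> (m >= k)%nat ->
    Rabs (Re (a n) - Re (a m)) < / INR (S k) /\ Rabs (Im (a n) - Im (a m)) < / INR (S k)).
  { intros k n m Hn1 Hm1.
    destruct (proj2_sig (Ofun k)) as (_ & _ & HO). apply HO.
    - apply (HPs n); [lia | exact (proj2_sig (seq n))].
    - apply (HPs m); [lia | exact (proj2_sig (seq m))]. }
  destruct (cauchy_lim (fun k => Re (a k))) as [r Hr].
  { intros k n m Hn1 Hm1. apply (Ha k n m Hn1 Hm1). }
  destruct (cauchy_lim (fun k => Im (a k))) as [s Hs].
  { intros k n m Hn1 Hm1. apply (Ha k n m Hn1 Hm1). }
  destruct (Hhaus p (vscal (mkC r s) w) (Hp _)) as (P1 & Q & HP1 & HQ & P1p & Qa & Hd).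
  destruct (Hsc (mkC r s) w Q HQ Qa) as (del & U3 & Hdel & HU3 & U3w & HUW).
  destruct (arch (del / 4)) as [k Hk]; [lra|].
  destruct (Hden (fun z => P1 z /\ Pk k z)) as (c & Pc1 & Pck); [apply HoI; auto|split; auto|].
  destruct (proj2_sig (Ofun k)) as (_ & _ & HO).
  destruct (HO c (a k)) as [Hre Him].
  { apply (HPs k); auto. }
  { apply (HPs k); auto. exact (proj2_sig (seq k)). }
  specialize (Hr k k (le_n k)). specialize (Hs k k (le_n k)). cbv beta in Hr, Hs.
  assert (Qc : Q (vscal c w)).
  { apply HUW; auto. apply Cabs_lt; auto. unfold nrm2; simpl.
    pose proof (invS_pos k).
    apply Rabs_def2 in Hre. apply Rabs_def2 in Him.
    apply Rabs_le_2 in Hr. apply Rabs_le_2 in Hs. nra. }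
  apply (Hd (vscal c w)); auto.
Qed.

Lemma final_step (X : CTVS) (HX : is_HausdorffCTVS X)
  (Gamma : (X -> X) -> Prop)
  (HGamma : forall T, Gamma T -> is_bounded_op X T)
  (Hcomp : forall T S, Gamma T -> Gamma S -> ~ op_eq X T S ->
     exists A, Gamma A /\ op_eq X T (fun x => A (S x)))
  (U V : X -> Prop) (x0 : X) (a1 a2 : C) (T1 T2 : X -> X) :
  Gamma T1 -> Gamma T2 -> U (vscal a1 (T1 x0)) -> vscal a1 (T1 x0) <> vzero ->
  V (vscal a2 (T2 x0)) -> vscal a2 (T2 x0) <> vzero -> ~ op_eq X T2 T1 ->
  exists (a : C) (T : X -> X), a <> C0 /\ Gamma T /\
      exists u, U u /\ V (T (vscal a u)).
Proof.
  pose proof HX as HX'. dHX HX'.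
  intros G1 G2 HU1 Hn1 HV2 Hn2 Hne.
  pose proof (scal_nz X HX _ _ Hn1) as a1nz.
  pose proof (scal_nz X HX _ _ Hn2) as a2nz.
  destruct (Hcomp T2 T1 G2 G1 Hne) as (A & GA & HA).
  exists (Cmul a2 (Cinv a1)), A. split; [|split; auto].
  - intros E. apply a2nz. rewrite <- (Cmul_inv_r a2 a1 a1nz), E.
    apply C_ext; simpl; ring.
  - exists (vscal a1 (T1 x0)). split; auto.
    rewrite Hsm, Cmul_inv_r by auto.
    destruct (HGamma A GA) as (_ & HAs & _). rewrite HAs, <- HA. exact HV2.
Qed.

Theorem theorem3p8 (X : CTVS) (HX : is_HausdorffCTVS X) (Hdim : dim_gt1 X)
  (Gamma : (X -> X) -> Prop)
  (HGamma : forall T, Gamma T -> is_bounded_op X T)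
  (Hcomp : forall T S, Gamma T -> Gamma S -> ~ op_eq X T S ->
     exists A, Gamma A /\ op_eq X T (fun x => A (S x))) :
  supercyclic X Gamma -> supercyclic_transitive X Gamma.
Proof.
  pose proof HX as HX'. dHX HX'.
  intros [x0 Hden] U V HU HUne HV HVne.
  set (U' := fun z => U z /\ z <> vzero).
  set (V' := fun z => V z /\ z <> vzero).
  assert (HU' : is_open U') by (apply HoI; auto; apply open_nz; auto).
  assert (HV' : is_open V') by (apply HoI; auto; apply open_nz; auto).
  destruct (Hden U' HU' (nonzero_in_open X HX Hdim U HU HUne))
    as (y1 & [Uy1 nz1] & (a1 & T1 & G1 & E1)).
  destruct (Hden V' HV' (nonzero_in_open X HX Hdim V HV HVne))
    as (y2 & [Vy2 nz2] & (a2 & T2 & G2 & E2)).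
  subst y1 y2.
  destruct (classic (op_eq X T2 T1)) as [Heq | Hne].
  2:{ apply (final_step X HX Gamma HGamma Hcomp U V x0 a1 a2 T1 T2); auto. }
  set (w := T1 x0).
  assert (V'2 : V' (vscal a2 w)) by (unfold w; rewrite <- Heq; split; auto).
  destruct (exists_notin_line X HX Hdim w) as [z Hz].
  destruct (perturb X HX V' w z a2 HV' V'2 Hz) as (p & V'p & Hpl).
  destruct (closed_line X HX w p Hpl) as (P & HP & Pp & HPl).
  destruct (Hden (fun y => V' y /\ P y)) as (y3 & [[Vy3 nz3] Py3] & (a3 & T3 & G3 & E3)).
  { apply HoI; auto. }
  { exists p; auto. }
  subst y3.
  apply (final_step X HX Gamma HGamma Hcomp U V x0 a1 a3 T1 T3); auto.
  intros Heq3. apply (HPl a3). unfold w; rewrite <- Heq3; auto.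
Qed.
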